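(* Let $k>l\ge0$ be integers. Then for every pair of positive numbers $C_1<1$ and $C_2>1$ there exists $N\in\mathbb{N}$ such that for all $n\ge N$, $$C_1n^{(k+l)/2}\le\beta^{lk}_n<\beta^{kl}_n\le C_2n^{(k+l)/2}.$$
   Context: For integers $x$ and $s\ge0$, $(x,s)=x(x+1)\cdots(x+s-1)$ ($=1$ if $s=0$), with the convention $(x,s)=0$ whenever $x$ is a negative integer; for integers $n$ and $k,l\ge0$, $\beta^{kl}_n=\sqrt{(n-l+1,l)(n-l+1,k)}$. *)

(* Defs.v *)
From Stdlib Require Import Reals ZArith.
Open Scope R_scope.

Fixpoint rising_raw (x : Z) (s : nat) : R :=
  match s with
  | O => 1
  | S s' => rising_raw x s' * IZR (x + Z.of_nat s')
  end.

(* (x,s) with the paper's convention: (x,s) = 0 whenever x is a negative integer. *)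
Definition rising (x : Z) (s : nat) : R :=
  if (x <? 0)%Z then 0 else rising_raw x s.

Definition beta (n : Z) (k l : nat) : R :=
  sqrt (rising (n - Z.of_nat l + 1)%Z l * rising (n - Z.of_nat l + 1)%Z k).

(* Main.v *)
Require Import Defs.
From Stdlib Require Import Reals ZArith Lra Lia Psatz.
Open Scope R_scope.

Lemma rising_nonneg_eq (x : Z) s : (0 <= x)%Z -> rising x s = rising_raw x s.
Proof. intros H. unfold rising. destruct (Z.ltb_spec x 0); [lia|reflexivity]. Qed.

Lemma rr_lower (x : Z) a s : 0 < a -> a <= IZR x -> a ^ s <= rising_raw x s.
Proof.
  intros Ha Hx. induction s as [|s IH]; simpl. lra.
  rewrite plus_IZR, <- INR_IZR_INZ.
  assert (0 <= INR s) by apply pos_INR.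
  assert (0 < a ^ s) by (apply pow_lt; lra).
  rewrite Rmult_comm. apply Rmult_le_compat; lra.
Qed.

Lemma rr_nonneg (x : Z) s : 0 <= IZR x -> 0 <= rising_raw x s.
Proof.
  intros Hx. induction s; simpl. lra. rewrite plus_IZR, <- INR_IZR_INZ.
  apply Rmult_le_pos; [lra| pose proof (pos_INR s); lra].
Qed.

Lemma rr_upper (x : Z) b s : 0 <= IZR x -> IZR x + INR s <= b -> rising_raw x s <= b ^ s.
Proof.
  intros Hx Hb. induction s as [|s IH]; simpl. lra.
  rewrite plus_IZR, <- INR_IZR_INZ.
  rewrite S_INR in Hb.
  assert (0 <= INR s) by apply pos_INR.
  assert (0 < 1 ^ s) by (apply pow_lt; lra).
  destruct (Req_dec (IZR x) 0) as [E|E].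
  -
    assert (0 <= rising_raw x s) by (apply rr_nonneg; lra).
    rewrite Rmult_comm. apply Rmult_le_compat; try lra.
  - assert (0 < IZR x) by lra.
    assert (Hl : (IZR x) ^ s <= rising_raw x s) by (apply rr_lower; lra).
    assert (0 < IZR x ^ s) by (apply pow_lt; lra).
    rewrite Rmult_comm. apply Rmult_le_compat; try lra.
Qed.

Lemma rr_mono (x y : Z) s : 1 <= IZR x -> IZR x <= IZR y -> rising_raw x s <= rising_raw y s.
Proof.
  intros H1 H2. induction s as [|s IH]; simpl. lra.
  rewrite !plus_IZR, <- INR_IZR_INZ.
  assert (0 <= INR s) by apply pos_INR.
  assert (1 ^ s <= rising_raw x s) by (apply rr_lower; lra).
  rewrite pow1 in H0.
  apply Rmult_le_compat; lra.
Qed.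

Lemma rr_strict (x y : Z) s : 1 <= IZR x -> IZR x < IZR y -> (0 < s)%nat ->
  rising_raw x s < rising_raw y s.
Proof.
  intros H1 H2 Hs. destruct s as [|s]; [lia|]. simpl.
  rewrite !plus_IZR, <- INR_IZR_INZ.
  assert (0 <= INR s) by apply pos_INR.
  assert (1 ^ s <= rising_raw x s) by (apply rr_lower; lra).
  rewrite pow1 in H0.
  assert (rising_raw x s <= rising_raw y s) by (apply rr_mono; lra).
  apply Rle_lt_trans with (rising_raw y s * (IZR x + INR s)).
  apply Rmult_le_compat_r; lra.
  apply Rmult_lt_compat_l; lra.
Qed.

Lemma bern m y : 0 <= y <= 1 -> 1 - INR m * y <= (1 - y) ^ m.
Proof.
  intros Hy. induction m as [|m IH]. simpl; lra.
  rewrite S_INR. change ((1 - y) ^ S m) with ((1 - y) * (1 - y) ^ m). assert (0 <= INR m) by apply pos_INR.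
  assert (0 <= (1-y)^m) by (apply pow_le; lra).
  nra.
Qed.

Lemma pow_ratio m A B : 0 < A -> 0 <= B <= A ->
  A ^ m * (1 - INR m * ((A - B) / A)) <= B ^ m.
Proof.
  intros HA HB.
  assert (E : B = A * (1 - (A - B)/A)) by (field; lra).
  rewrite E at 2. rewrite Rpow_mult_distr.
  apply Rmult_le_compat_l. apply pow_le; lra.
  apply bern. split.
  apply Rmult_le_pos; [lra| apply Rlt_le, Rinv_0_lt_compat; lra].
  apply (Rmult_le_reg_r A); [lra|]. unfold Rdiv. rewrite Rmult_assoc, Rinv_l; lra.
Qed.

Lemma big_nat X : exists N : nat, forall n, (N <= n)%nat -> X <= INR n.
Proof.
  destruct (archimed (Rmax X 0)) as [H1 _].
  exists (Z.to_nat (up (Rmax X 0))). intros n Hn.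
  assert (0 < IZR (up (Rmax X 0))) by (pose proof (Rmax_r X 0); lra).
  apply lt_0_IZR in H.
  apply le_INR in Hn. rewrite INR_IZR_INZ, Z2Nat.id in Hn by lia.
  pose proof (Rmax_l X 0). lra.
Qed.

Lemma rpower_sqrt x m : 0 < x -> Rpower x (INR m / 2) = sqrt (x ^ m).
Proof.
  intros Hx. rewrite <- Rpower_pow by lra.
  replace (INR m) with (INR m / 2 + INR m / 2) at 2 by field.
  rewrite Rpower_plus. rewrite sqrt_square. reflexivity.
  unfold Rpower. left. apply exp_pos.
Qed.

Theorem lemma2p9 (k l : nat) (hkl : (l < k)%nat) (C1 C2 : R)
  (hC1pos : 0 < C1) (hC1 : C1 < 1) (hC2 : 1 < C2) :
  exists N : nat, forall n : nat, (N <= n)%nat ->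
    C1 * Rpower (INR n) (INR (k + l) / 2) <= beta (Z.of_nat n) l k /\
    beta (Z.of_nat n) l k < beta (Z.of_nat n) k l /\
    beta (Z.of_nat n) k l <= C2 * Rpower (INR n) (INR (k + l) / 2).
Proof.
  set (m := (k + l)%nat).
  destruct (big_nat (INR m * (INR k - 1) / (1 - C1 * C1))) as [N1 HN1].
  destruct (big_nat (INR m * (INR k + 1) * (C2 * C2) / (C2 * C2 - 1))) as [N2 HN2].
  exists (N1 + N2 + k + 1)%nat. intros n Hn.
  assert (Hk : 1 <= INR k) by (apply (le_INR 1); lia).
  assert (Hkn : INR k + 1 <= INR n) by (rewrite <- S_INR; apply le_INR; lia).
  assert (Hlk : INR l + 1 <= INR k) by (rewrite <- S_INR; apply le_INR; lia).
  assert (Hl0 : 0 <= INR l) by apply pos_INR.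
  assert (Hm : INR m = INR k + INR l) by (unfold m; apply plus_INR).
  specialize (HN1 n ltac:(lia)). specialize (HN2 n ltac:(lia)).
  assert (Hn0 : 0 < INR n) by lra.
  unfold beta.
  set (xa := (Z.of_nat n - Z.of_nat k + 1)%Z).
  set (xb := (Z.of_nat n - Z.of_nat l + 1)%Z).
  assert (Exa : IZR xa = INR n - INR k + 1).
  { unfold xa. rewrite plus_IZR, minus_IZR, <- !INR_IZR_INZ. reflexivity. }
  assert (Exb : IZR xb = INR n - INR l + 1).
  { unfold xb. rewrite plus_IZR, minus_IZR, <- !INR_IZR_INZ. reflexivity. }
  rewrite !rising_nonneg_eq by (unfold xa, xb; lia).
  assert (La : (INR n - INR k + 1) ^ k <= rising_raw xa k) by (apply rr_lower; lra).
  assert (Lb : (INR n - INR k + 1) ^ l <= rising_raw xa l) by (apply rr_lower; lra).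
  assert (Ua : rising_raw xb l <= (INR n + INR k + 1) ^ l) by (apply rr_upper; lra).
  assert (Ub : rising_raw xb k <= (INR n + INR k + 1) ^ k) by (apply rr_upper; lra).
  assert (P1 : 0 < (INR n - INR k + 1) ^ k) by (apply pow_lt; lra).
  assert (P2 : 0 < (INR n - INR k + 1) ^ l) by (apply pow_lt; lra).
  assert (S1 : rising_raw xa k < rising_raw xb k) by (apply rr_strict; lra || lia).
  assert (S2 : rising_raw xa l <= rising_raw xb l) by (apply rr_mono; lra).
  assert (Pn : 0 < INR n ^ m) by (apply pow_lt; lra).
  rewrite rpower_sqrt by lra.
  split; [|split].
  -
    assert (R1 := pow_ratio m (INR n) (INR n - INR k + 1) Hn0 ltac:(lra)).
    replace (INR n - (INR n - INR k + 1)) with (INR k - 1) in R1 by ring.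
    assert (Q : C1 * C1 <= 1 - INR m * ((INR k - 1) / INR n)).
    { assert (0 < 1 - C1 * C1) by nra.
      apply (Rmult_le_compat_r (1 - C1*C1)) in HN1; [|lra].
      unfold Rdiv in *. rewrite Rmult_assoc, Rinv_l, Rmult_1_r in HN1 by lra.
      apply (Rmult_le_reg_r (INR n)); [lra|].
      replace ((1 - INR m * ((INR k - 1) * / INR n)) * INR n) with (INR n - INR m * (INR k - 1)) by (field; lra).
      nra. }
    assert (C1*C1 * INR n ^ m <= (INR n - INR k + 1) ^ m) by nra.
    unfold m in H. rewrite pow_add in H.
    rewrite <- (sqrt_pow2 C1) at 1 by lra. rewrite <- sqrt_mult by (try apply pow_le; nra).
    apply sqrt_le_1_alt. rewrite <- Rsqr_pow2 in *. unfold Rsqr in *. unfold m. rewrite pow_add in *.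
    apply Rle_trans with ((INR n - INR k + 1) ^ k * (INR n - INR k + 1) ^ l). lra.
    apply Rmult_le_compat; lra.
  - apply sqrt_lt_1_alt. split. apply Rmult_le_pos; lra.
    apply Rlt_le_trans with (rising_raw xb k * rising_raw xa l).
    apply Rmult_lt_compat_r; lra.
    rewrite Rmult_comm. apply Rmult_le_compat_r; lra.
  - set (A := INR n + INR k + 1).
    assert (R1 := pow_ratio m A (INR n) ltac:(unfold A; lra) ltac:(unfold A; lra)).
    replace (A - INR n) with (INR k + 1) in R1 by (unfold A; ring).
    assert (Q : 1 <= C2 * C2 * (1 - INR m * ((INR k + 1) / A))).
    { assert (0 < C2 * C2 - 1) by nra.
      apply (Rmult_le_compat_r (C2*C2 - 1)) in HN2; [|lra].
      unfold Rdiv in *. rewrite Rmult_assoc, Rinv_l, Rmult_1_r in HN2 by lra.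
      assert (0 < A) by (unfold A; lra).
      apply (Rmult_le_reg_r A); [lra|].
      replace (C2 * C2 * (1 - INR m * ((INR k + 1) * / A)) * A) with (C2*C2*(A - INR m * (INR k + 1))) by (field; lra).
      assert (0 <= INR m) by (rewrite Hm; lra).
      unfold A. nra. }
    assert (0 < A ^ m) by (apply pow_lt; unfold A; lra).
    assert (A ^ m <= C2 * C2 * INR n ^ m) by nra.
    rewrite <- (sqrt_pow2 C2) by lra. rewrite <- sqrt_mult by (try apply pow_le; nra).
    apply sqrt_le_1_alt. rewrite <- Rsqr_pow2. unfold Rsqr.
    apply Rle_trans with (A ^ m); [|lra]. unfold m. rewrite pow_add.
    assert (0 <= rising_raw xb l) by (apply Rle_trans with (rising_raw xa l); lra).
    assert (0 <= rising_raw xb k) by lra.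
    rewrite (Rmult_comm (A ^ k)). unfold A. apply Rmult_le_compat; lra.
Qed.
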